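(* In the two-tier residency matching game described in the context (list length $K$, high-match value $v>1$), under the large market approximation, a symmetric equilibrium for high doctors always exists.
   Context: Model: there are high-tier and low-tier doctors and high-tier and low-tier hospitals, each hospital having one position. Every hospital prefers every high doctor to every low doctor, and every doctor prefers every high hospital to every low hospital; within a tier, preferences are independent uniformly random permutations. Each doctor submits a ranked list of exactly $K$ hospitals; hospitals submit full true rankings; doctor-proposing deferred acceptance is run. A doctor's strategy is a pair $(k,K-k)$: he lists his $k$ most preferred high hospitals followed by his $K-k$ most preferred low hospitals. A doctor gets value $v>1$ if matched to a high hospital, $1$ if matched to a low one, $0$ otherwise. Large market approximation: in the limit of many agents (tier proportions, $K$, $v$ fixed), given the strategy profile, each application of a high doctor to a high (resp. low) hospital is accepted independently with a probability $p$ (resp. $p'$) determined by the aggregate profile via fixed-point equations (expected matched doctors = expected hospitals receiving at least one application, a hospital with on average $\lambda$ applications receiving none with probability $e^{-\lambda}$), and unaffected by an individual doctor's choice. Since hospitals rank all high doctors above low ones, the high doctors' assignment does not depend on low doctors. A symmetric equilibrium for high doctors is a (possibly mixed) strategy used by all high doctors such that every strategy in its support maximizes a high doctor's expected value given $p,p'$. *)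

(* Defs.v *)
From HB Require Import structures.
From mathcomp Require Import all_boot all_order all_algebra.
From mathcomp Require Import all_classical all_reals all_analysis.
Set Implicit Arguments. Unset Strict Implicit. Unset Printing Implicit Defensive.
Import Order.TTheory GRing.Theory Num.Theory.
Local Open Scope ring_scope.

Section TwoTier.
Variable R : realType.

(* A pure strategy of a high doctor is k : 'I_K.+1, meaning the list
   (k, K-k): his k most preferred high hospitals, then his K-k most
   preferred low hospitals. *)
Definition is_mixed (K : nat) (sigma : 'I_K.+1 -> R) : Prop :=
  (forall k, 0 <= sigma k) /\ \sum_(k < K.+1) sigma k = 1.

(* Expected number of applications actually made (during DA) to a block of
   j hospitals listed consecutively, each accepting independently with
   probability q: the doctor proposes until first acceptance,
   i.e. sum_{i<j} (1-q)^i  ( = (1-(1-q)^j)/q ). *)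
Definition napps (q : R) (j : nat) : R := \sum_(i < j) (1 - q) ^+ i.

Definition pmatch (q : R) (j : nat) : R := 1 - (1 - q) ^+ j.

(* Expected value for a high doctor playing (k, K-k) given acceptance
   probabilities p (high hospitals) and p' (low hospitals). *)
Definition value (v p p' : R) (K k : nat) : R :=
  v * pmatch p k + (1 - p) ^+ k * pmatch p' (K - k).

(* Fixed-point equation for p (high hospitals), mass nH of high doctors,
   mass mH of high hospitals: expected number of matched high doctors at
   high hospitals = expected number of high hospitals receiving at least
   one application (Poisson with mean lambda = applications / mH).  If no
   application at all is sent to high hospitals the equation is void; we
   then use the limiting convention p = 1. *)
Definition high_fixed_point (nH mH : R) (K : nat) (sigma : 'I_K.+1 -> R)
    (p : R) : Prop :=
  let A := \sum_(k < K.+1) sigma k * napps p k in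
  let M := \sum_(k < K.+1) sigma k * pmatch p k in
  [/\ 0 < p <= 1,
      nH * M = mH * (1 - expR (- (nH * A / mH)))
    & A = 0 -> p = 1].

(* Low hospitals rank
   all high doctors above all low doctors, so only high doctors matter.  A
   high doctor playing k reaches the low part of his list with probability
   (1-p)^k. *)
Definition low_fixed_point (nH mL : R) (K : nat) (sigma : 'I_K.+1 -> R)
    (p p' : R) : Prop :=
  let A := \sum_(k < K.+1) sigma k * ((1 - p) ^+ k * napps p' (K - k)) in
  let M := \sum_(k < K.+1) sigma k * ((1 - p) ^+ k * pmatch p' (K - k)) in
  [/\ 0 < p' <= 1,
      nH * M = mL * (1 - expR (- (nH * A / mL)))
    & A = 0 -> p' = 1].

Definition symmetric_equilibrium (nH mH mL v : R) (K : nat)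
    (sigma : 'I_K.+1 -> R) : Prop :=
  is_mixed sigma /\
  exists p p' : R,
    [/\ high_fixed_point nH mH sigma p,
        low_fixed_point nH mL sigma p p'
      & forall k : 'I_K.+1, 0 < sigma k ->
          forall k' : 'I_K.+1, value v p p' K k' <= value v p p' K k].

End TwoTier.

(* Main.v *)
Require Import Defs.
From HB Require Import structures.
From mathcomp Require Import all_boot all_order all_algebra.
From mathcomp Require Import all_classical all_reals all_analysis.
From mathcomp Require Import ring lra.
Import Order.TTheory GRing.Theory Num.Theory.
Import numFieldNormedType.Exports.
Local Open Scope ring_scope.
Set Implicit Arguments. Unset Strict Implicit.

Section Alg.
Variable R : realType.
Implicit Types x y : R.

Lemma napps0 x : napps x 0 = 0.
Proof. by rewrite /napps big_ord0. Qed.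

Lemma nappsS x j : napps x j.+1 = napps x j + (1 - x) ^+ j.
Proof. by rewrite /napps big_ord_recr. Qed.

Lemma pmatchE x j : pmatch x j = x * napps x j.
Proof.
elim: j => [|j IH]; first by rewrite /pmatch napps0 expr0 subrr mulr0.
rewrite nappsS mulrDr -IH /pmatch exprS; ring.
Qed.

Lemma napps_ge0 x j : x <= 1 -> 0 <= napps x j.
Proof.
move=> hx; apply: sumr_ge0 => i _; apply: exprn_ge0; lra.
Qed.

Lemma napps_ge1 x j : x <= 1 -> (0 < j)%N -> 1 <= napps x j.
Proof.
move=> hx; case: j => // j _; elim: j => [|j IH].
  by rewrite nappsS napps0 expr0 add0r.
rewrite nappsS; have := exprn_ge0 j.+1 (_ : 0 <= 1 - x); lra.
Qed.

Lemma napps_le x y j : 0 <= x <= y -> y <= 1 -> napps y j <= napps x j.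
Proof.
move=> /andP[x0 xy] y1; apply: ler_sum => i _; apply: lerXn2r; rewrite ?nnegrE; lra.
Qed.

Lemma pmatch_le x y j : 0 <= x <= y -> y <= 1 -> pmatch x j <= pmatch y j.
Proof.
move=> /andP[x0 xy] y1; rewrite /pmatch lerD2l lerN2.
apply: lerXn2r; rewrite ?nnegrE; lra.
Qed.

Lemma pmatch_lt x y j : 0 <= x -> x < y -> y <= 1 -> (0 < j)%N -> pmatch x j < pmatch y j.
Proof.
move=> x0 xy y1 j0; rewrite /pmatch ltrD2l ltrN2 ltrXn2r ?subr_ge0 -?lt0n //; lra.
Qed.

Lemma pmatch_ge0 x j : 0 <= x <= 1 -> 0 <= pmatch x j.
Proof.
move=> /andP[x0 x1]; rewrite pmatchE mulr_ge0 // napps_ge0 //.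
Qed.

Lemma napps1 j : napps (1 : R) j = (0 < j)%N%:R.
Proof.
case: j => [|j]; first by rewrite napps0.
rewrite /napps big_ord_recl subrr expr0 big1 ?addr0 // => i _.
by rewrite expr0n.
Qed.

End Alg.

Section Cont.
Variable R : realType.
Implicit Types (f g : R -> R) (x : R).

Lemma cD f g x : {for x, continuous f} -> {for x, continuous g} ->
  {for x, continuous (fun s => f s + g s)}.
Proof. exact: continuousD. Qed.
Lemma cB f g x : {for x, continuous f} -> {for x, continuous g} ->
  {for x, continuous (fun s => f s - g s)}.
Proof. exact: continuousB. Qed.
Lemma cM f g x : {for x, continuous f} -> {for x, continuous g} ->
  {for x, continuous (fun s => f s * g s)}.
Proof. exact: continuousM. Qed.
Lemma cN f x : {for x, continuous f} -> {for x, continuous (fun s => - f s)}.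
Proof. exact: continuousN. Qed.
Lemma cC (a : R) x : {for x, continuous (fun _ : R => a)}.
Proof. exact: cvg_cst. Qed.
Lemma cI x : {for x, continuous (fun s : R => s)}.
Proof. exact: cvg_id. Qed.
Lemma cE f x : {for x, continuous f} -> {for x, continuous (fun s => expR (f s))}.
Proof. move=> h; apply: (continuous_comp h); exact: continuous_expR. Qed.
Lemma cX f n x : {for x, continuous f} -> {for x, continuous (fun s => f s ^+ n)}.
Proof. move=> h; exact: (continuous_comp h (@exprn_continuous R n (f x))). Qed.
Lemma cMax f g x : {for x, continuous f} -> {for x, continuous g} ->
  {for x, continuous (fun s => Num.max (f s) (g s))}.
Proof. exact: continuous_max. Qed.
Lemma cNorm f x : {for x, continuous f} -> {for x, continuous (fun s => `|f s|)}.
Proof. move=> h; exact: cvg_norm. Qed.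
Lemma cS n (F : 'I_n -> R -> R) x : (forall i, {for x, continuous (F i)}) ->
  {for x, continuous (fun s => \sum_(i < n) F i s)}.
Proof.
elim: n F => [|n IH] F H.
  rewrite (_ : (fun s => _) = fun _ => 0); first exact: cC.
  by apply: funext => s; rewrite big_ord0.
rewrite (_ : (fun s => _) = (fun s => \sum_(i < n) F (widen_ord (leqnSn n) i) s + F ord_max s)).
  by apply: cD; [apply: IH => i; exact: H | exact: H].
by apply: funext => s; rewrite big_ord_recr.
Qed.
End Cont.

Section Gen.
Variable R : realType.
Variable K : nat.
Variables c m : R.
Hypothesis hc : 0 < c.
Hypothesis hm : 0 < m.
Implicit Types (w : 'I_K.+1 -> R) (d : 'I_K.+1 -> nat) (x y : R).

Definition Agen w d x := \sum_(k < K.+1) w k * napps x (d k).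
Definition Mgen w d x := \sum_(k < K.+1) w k * pmatch x (d k).
Definition Ggen w d x := c * Mgen w d x - m * (1 - expR (- (c * Agen w d x / m))).
Definition FPgen w d x := [/\ 0 < x <= 1,
   c * Mgen w d x = m * (1 - expR (- (c * Agen w d x / m))) & Agen w d x = 0 -> x = 1].
Definition ND w d := exists k, 0 < w k /\ (0 < d k)%N.

Lemma MgenE w d x : Mgen w d x = x * Agen w d x.
Proof.
rewrite /Mgen /Agen mulr_sumr; apply: eq_bigr => k _; rewrite pmatchE; ring.
Qed.

Lemma term_le (F : 'I_K.+1 -> R) k : (forall i, 0 <= F i) -> F k <= \sum_(i < K.+1) F i.
Proof.
move=> h; rewrite (bigD1 k) //= lerDl; apply: sumr_ge0 => i _; exact: h.
Qed.

Lemma Agen_ge0 w d x : (forall k, 0 <= w k) -> x <= 1 -> 0 <= Agen w d x.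
Proof. move=> hw hx; apply: sumr_ge0 => k _; apply: mulr_ge0 => //; exact: napps_ge0. Qed.

Lemma Agen_pos w d x : (forall k, 0 <= w k) -> ND w d -> x <= 1 -> 0 < Agen w d x.
Proof.
move=> hw [k [wk dk]] hx.
have h1 : 1 <= napps x (d k) by exact: napps_ge1.
rewrite /Agen; apply: (lt_le_trans _ (@term_le (fun i => w i * napps x (d i)) k _)).
  by apply: (lt_le_trans wk); rewrite ler_peMr //; exact: ltW.
by move=> i; apply: mulr_ge0 => //; exact: napps_ge0.
Qed.

Lemma Agen_anti w d x y : (forall k, 0 <= w k) -> 0 <= x <= y -> y <= 1 ->
  Agen w d y <= Agen w d x.
Proof.
move=> hw hxy hy; apply: ler_sum => k _; apply: ler_wpM2l => //; exact: napps_le.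
Qed.

Lemma Mgen_mono w d x y : (forall k, 0 <= w k) -> 0 <= x <= y -> y <= 1 ->
  Mgen w d x <= Mgen w d y.
Proof.
move=> hw hxy hy; apply: ler_sum => k _; apply: ler_wpM2l => //; exact: pmatch_le.
Qed.

Lemma Mgen_smono w d x y : (forall k, 0 <= w k) -> ND w d -> 0 <= x -> x < y -> y <= 1 ->
  Mgen w d x < Mgen w d y.
Proof.
move=> hw [k [wk dk]] x0 xy y1.
rewrite -subr_gt0 /Mgen -sumrB.
have hle : forall i, 0 <= w i * pmatch y (d i) - w i * pmatch x (d i).
  move=> i; rewrite -mulrBr; apply: mulr_ge0 => //; rewrite subr_ge0.
  apply: pmatch_le => //; apply/andP; split => //; exact: ltW.
apply: (lt_le_trans _ (@term_le (fun i => w i * pmatch y (d i) - w i * pmatch x (d i)) k hle)) => /=.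
by rewrite -mulrBr mulr_gt0 // subr_gt0 pmatch_lt.
Qed.

Lemma Ggen_mono w d x y : (forall k, 0 <= w k) -> 0 <= x <= y -> y <= 1 ->
  Ggen w d x <= Ggen w d y.
Proof.
move=> hw hxy hy; rewrite /Ggen.
have h1 := Mgen_mono d hw hxy hy.
have h2 := Agen_anti d hw hxy hy.
have h3 : expR (- (c * Agen w d x / m)) <= expR (- (c * Agen w d y / m)).
  by rewrite ler_expR lerN2 ler_pM2r ?invr_gt0 // ler_pM2l.
apply: lerD; first by rewrite ler_pM2l.
by rewrite lerN2 ler_pM2l //; lra.
Qed.

Lemma Ggen_smono w d x y : (forall k, 0 <= w k) -> ND w d -> 0 <= x -> x < y -> y <= 1 ->
  Ggen w d x < Ggen w d y.
Proof.
move=> hw nd x0 xy hy; rewrite /Ggen.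
have hxy : 0 <= x <= y by rewrite x0 ltW.
have h1 := Mgen_smono hw nd x0 xy hy.
have h2 := Agen_anti d hw hxy hy.
have h3 : expR (- (c * Agen w d x / m)) <= expR (- (c * Agen w d y / m)).
  by rewrite ler_expR lerN2 ler_pM2r ?invr_gt0 // ler_pM2l.
apply: ltr_leD; first by rewrite ltr_pM2l.
by rewrite lerN2 ler_pM2l //; lra.
Qed.

Lemma Ggen0 w d : (forall k, 0 <= w k) -> ND w d -> Ggen w d 0 < 0.
Proof.
move=> hw nd; rewrite /Ggen MgenE mul0r mulr0 sub0r oppr_lt0.
apply: mulr_gt0 => //; rewrite subr_gt0 expR_lt1 oppr_lt0.
apply: divr_gt0 => //; apply: mulr_gt0 => //; apply: Agen_pos => //; lra.
Qed.

Lemma expR_bound y : 0 < y -> 1 - expR (- y) < y.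
Proof.
move=> y0; have hy : - y != 0 by rewrite oppr_eq0 gt_eqF.
have := expR_gt1Dx hy; rewrite -subr_gt0 => h; rewrite -subr_gt0.
by have -> : y - (1 - expR (- y)) = expR (- y) - (1 + - y) by ring.
Qed.

Lemma Ggen1 w d : (forall k, 0 <= w k) -> ND w d -> 0 < Ggen w d 1.
Proof.
move=> hw nd; rewrite /Ggen MgenE mul1r subr_gt0.
have A0 : 0 < Agen w d 1 by apply: Agen_pos.
have y0 : 0 < c * Agen w d 1 / m by apply: divr_gt0 => //; apply: mulr_gt0.
have e : c * Agen w d 1 = m * (c * Agen w d 1 / m) by rewrite [RHS]mulrC divfK // gt_eqF.
rewrite {2}e ltr_pM2l //; exact: expR_bound.
Qed.

Lemma napps_cont j x : {for x, continuous (fun y : R => napps y j)}.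
Proof.
rewrite /napps; apply: cS => i; apply: cX; apply: cB; [exact: cC | exact: cI].
Qed.

Lemma Agen_cont w d x : {for x, continuous (Agen w d)}.
Proof. apply: cS => k; apply: cM; [exact: cC | exact: napps_cont]. Qed.

Lemma Ggen_cont w d x : {for x, continuous (Ggen w d)}.
Proof.
rewrite /Ggen; apply: cB.
  apply: cM; first exact: cC.
  apply: cS => k; apply: cM; first exact: cC.
  rewrite /pmatch; apply: cB; first exact: cC.
  apply: cX; apply: cB; [exact: cC | exact: cI].
apply: cM; first exact: cC.
apply: cB; first exact: cC.
apply: cE; apply: cN; apply: cM; last exact: cC.
apply: cM; [exact: cC | exact: Agen_cont].
Qed.

Lemma Ggen_root w d : (forall k, 0 <= w k) -> ND w d ->
  exists x, 0 < x < 1 /\ Ggen w d x = 0.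
Proof.
move=> hw nd.
have [| |x xin gx] := @IVT R (Ggen w d) 0 1 0 ler01.
- by apply: continuous_subspaceT => x; exact: Ggen_cont.
- have h0 := Ggen0 hw nd; have h1 := Ggen1 hw nd.
  by rewrite ge_min le_max (ltW h0) (ltW h1) /= orbT.
- move: xin; rewrite in_itv /= => /andP[x0 x1].
  exists x; split => //.
  have h0 : x != 0 by apply/eqP => e; move: gx; rewrite e; have := Ggen0 hw nd; lra.
  have h1 : x != 1 by apply/eqP => e; move: gx; rewrite e; have := Ggen1 hw nd; lra.
  by rewrite lt_neqAle eq_sym h0 x0 lt_neqAle h1 x1.
Qed.

Lemma FPgen_of_root w d x : (forall k, 0 <= w k) -> ND w d -> 0 < x < 1 ->
  Ggen w d x = 0 -> FPgen w d x.
Proof.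
move=> hw nd /andP[x0 x1] g; split.
- by rewrite x0 ltW.
- by apply/eqP; rewrite -subr_eq0; apply/eqP.
- by move=> A0; have := Agen_pos hw nd (ltW x1); rewrite A0 ltxx.
Qed.

Lemma root_of_FPgen w d x : FPgen w d x -> Ggen w d x = 0.
Proof. by case=> _ e _; rewrite /Ggen e subrr. Qed.

Lemma FPgen_lt1 w d x : (forall k, 0 <= w k) -> ND w d -> FPgen w d x -> x < 1.
Proof.
move=> hw nd fp; have := root_of_FPgen fp; case: fp => /andP[x0 x1] _ _ g.
rewrite lt_neqAle x1 andbT; apply/eqP => e; move: g; rewrite e; have := Ggen1 hw nd; lra.
Qed.

Lemma FPgen_degen w d : (forall k, w k = 0 \/ d k = 0%N) ->
  FPgen w d 1 /\ (forall x, FPgen w d x -> x = 1).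
Proof.
move=> h.
have A0 : forall x, Agen w d x = 0.
  move=> x; rewrite /Agen big1 // => k _; case: (h k) => ->; by rewrite ?mul0r ?napps0 ?mulr0.
split; last by move=> x [_ _]; apply; exact: A0.
split => //; first by rewrite ltr01 lexx.
by rewrite MgenE A0 !mulr0 mul0r oppr0 expR0 subrr mulr0.
Qed.

End Gen.

Section Impl.
Variable R : realType.

Lemma impl_cont (G : R -> R -> R) (X : R -> R) (s0 : R) :
  (forall x, {for s0, continuous (fun s : R => G s x)}) ->
  (\forall s \near s0, forall x y, 0 <= x <= y -> y <= 1 -> G s x <= G s y) ->
  (\forall s \near s0, 0 <= X s <= 1 /\ G s (X s) = 0) ->
  (forall x, 0 <= x -> x < X s0 -> G s0 x < 0) ->
  (forall x, X s0 < x -> x <= 1 -> 0 < G s0 x) ->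
  {for s0, continuous X}.
Proof.
move=> Gc Gm HX Hlt Hgt.
have [/andP[X0 X1] _] := nbhs_singleton HX.
apply/cvgrPdist_lt => e e0.
have Hlo : \forall s \near s0, X s0 - e < X s.
  have [lo_neg | lo_pos] := ltP (X s0 - e / 2) 0.
    near=> s; have [/andP[Xs0 _] _] : 0 <= X s <= 1 /\ G s (X s) = 0 by near: s.
    lra.
  have g0 : G s0 (X s0 - e / 2) < 0 by apply: Hlt => //; lra.
  have := @cvgr_lt _ _ _ _ _ _ (Gc (X s0 - e / 2)) _ g0.
  move=> Hn; near=> s.
  have gs : G s (X s0 - e / 2) < 0 by near: s; exact: Hn.
  have [/andP[Xs0 Xs1] gX] : 0 <= X s <= 1 /\ G s (X s) = 0 by near: s.
  have mono : forall x y, 0 <= x <= y -> y <= 1 -> G s x <= G s y by near: s.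
  rewrite ltNge; apply/negP => hle.
  have : G s (X s) <= G s (X s0 - e / 2).
    apply: mono; first by rewrite Xs0; lra.
    lra.
  lra.
have Hhi : \forall s \near s0, X s < X s0 + e.
  have [hi_big | hi_small] := ltP 1 (X s0 + e / 2).
    near=> s; have [/andP[_ Xs1] _] : 0 <= X s <= 1 /\ G s (X s) = 0 by near: s.
    lra.
  have g0 : 0 < G s0 (X s0 + e / 2) by apply: Hgt => //; lra.
  have := @cvgr_gt _ _ _ _ _ _ (Gc (X s0 + e / 2)) _ g0.
  move=> Hn; near=> s.
  have gs : 0 < G s (X s0 + e / 2) by near: s; exact: Hn.
  have [/andP[Xs0 Xs1] gX] : 0 <= X s <= 1 /\ G s (X s) = 0 by near: s.
  have mono : forall x y, 0 <= x <= y -> y <= 1 -> G s x <= G s y by near: s.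
  rewrite ltNge; apply/negP => hle.
  have : G s (X s0 + e / 2) <= G s (X s).
    apply: mono => //; apply/andP; split; lra.
  lra.
near=> s.
have a : X s0 - e < X s by near: s.
have b : X s < X s0 + e by near: s.
by rewrite ltr_distlC a b.
Unshelve. all: by end_near.
Qed.

End Impl.

Section BR.
Variable R : realType.
Variables (v p p' : R) (K : nat).
Hypothesis hv : 1 < v.
Hypotheses (hp0 : 0 <= p) (hp1 : p <= 1) (hq0 : 0 <= p') (hq1 : p' <= 1).
Local Ltac hyps := have := hv; have := hp0; have := hp1; have := hq0; have := hq1; move=> ? ? ? ? ?.

Definition ff (k : nat) : R := (1 - p) ^+ k * (v - 1 + (1 - p') ^+ (K - k)).
Definition DD (i : nat) : R :=
  (1 - p) * (v - 1 + (1 - p') ^+ (K - i.+1)) - (v - 1 + (1 - p') ^+ (K - i)).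

Lemma valueE k : value v p p' K k = v - ff k.
Proof. rewrite /value /pmatch /ff; ring. Qed.

Lemma ffS i : (i < K)%N -> ff i.+1 - ff i = (1 - p) ^+ i * DD i.
Proof. move=> hi; rewrite /ff /DD exprS; ring. Qed.

Lemma DD_up i : (i.+1 < K)%N -> 0 <= DD i -> 0 <= DD i.+1.
Proof.
move=> hi; hyps; rewrite /DD.
have e1 : (K - i = (K - i.+2).+2)%N by rewrite -!subSn //; apply: ltnW.
have e2 : (K - i.+1 = (K - i.+2).+1)%N by rewrite -subSn.
rewrite e1 e2 !exprS.
set r := (1 - p') ^+ (K - i.+2).
have r0 : 0 <= r by apply: exprn_ge0; lra.
have r1 : r <= 1 by apply: exprn_ile1; lra.
set q := 1 - p; set q' := 1 - p'.
have q0 : 0 <= q by rewrite /q; lra.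
have q'0 : 0 <= q' by rewrite /q'; lra.
have q'1 : q' <= 1 by rewrite /q'; lra.
move=> h.
have c0 : 0 < v - 1 + q' * r by have := mulr_ge0 q'0 r0; lra.
have key : (v - 1 + q' * r) ^+ 2 <= (v - 1 + r) * (v - 1 + q' * (q' * r)).
  have : 0 <= (v - 1) * r * (1 - q') ^+ 2.
    by apply: mulr_ge0; [apply: mulr_ge0 => //; lra | apply: sqr_ge0].
  move=> hh; rewrite -subr_ge0.
  by have -> : (v - 1 + r) * (v - 1 + q' * (q' * r)) - (v - 1 + q' * r) ^+ 2 = (v - 1) * r * (1 - q') ^+ 2 by ring.
rewrite subr_ge0 in h *.
have vr : 0 <= v - 1 + r by lra.
have h2 := ler_wpM2l vr h.
rewrite expr2 in key.
nra.
Qed.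

Lemma DD_up_strict i : (i.+1 < K)%N -> 0 < DD i -> 0 < DD i.+1.
Proof.
move=> hi; hyps; rewrite /DD.
have e1 : (K - i = (K - i.+2).+2)%N by rewrite -!subSn //; apply: ltnW.
have e2 : (K - i.+1 = (K - i.+2).+1)%N by rewrite -subSn.
rewrite e1 e2 !exprS.
set r := (1 - p') ^+ (K - i.+2).
have r0 : 0 <= r by apply: exprn_ge0; lra.
set q := 1 - p; set q' := 1 - p'.
have q0 : 0 <= q by rewrite /q; lra.
have q'0 : 0 <= q' by rewrite /q'; lra.
move=> h.
have c0 : 0 < v - 1 + q' * r by have := mulr_ge0 q'0 r0; lra.
have key : (v - 1 + q' * r) ^+ 2 <= (v - 1 + r) * (v - 1 + q' * (q' * r)).
  have : 0 <= (v - 1) * r * (1 - q') ^+ 2.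
    by apply: mulr_ge0; [apply: mulr_ge0 => //; lra | apply: sqr_ge0].
  move=> hh; rewrite -subr_ge0.
  by have -> : (v - 1 + r) * (v - 1 + q' * (q' * r)) - (v - 1 + q' * r) ^+ 2 = (v - 1) * r * (1 - q') ^+ 2 by ring.
rewrite subr_gt0 in h *.
have vr : 0 < v - 1 + r by lra.
have h2 : (v - 1 + r) * (v - 1 + q' * (q' * r)) < (v - 1 + r) * (q * (v - 1 + q' * r)) by rewrite ltr_pM2l.
rewrite expr2 in key.
nra.
Qed.


Lemma DD_up_all i j : (i <= j)%N -> (j < K)%N -> 0 <= DD i -> 0 <= DD j.
Proof.
move=> + jK; elim: j jK => [|j IH] jK hij h.
  by move: hij; rewrite leqn0 => /eqP <-.
move: hij; rewrite leq_eqVlt => /orP[/eqP <- //|hij].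
apply: DD_up => //; apply: IH => //; exact: ltnW.
Qed.

Lemma DD_down_all i j : (i <= j)%N -> (j < K)%N -> DD j <= 0 -> DD i <= 0.
Proof.
move=> + jK; elim: j jK => [|j IH] jK hij h.
  by move: hij; rewrite leqn0 => /eqP ->.
move: hij; rewrite leq_eqVlt => /orP[/eqP -> //|hij].
apply: IH => //; first exact: ltnW.
rewrite leNgt; apply/negP => hj.
have := DD_up_strict jK hj; rewrite ltNge h //.
Qed.

Lemma ff_min k : (k <= K)%N -> (forall i, (i < k)%N -> DD i <= 0) ->
  (forall i, (k <= i)%N -> (i < K)%N -> 0 <= DD i) ->
  forall k', (k' <= K)%N -> ff k <= ff k'.
Proof.
move=> kK Hdn Hup k' k'K; hyps.
have q0 : 0 <= 1 - p by lra.
case: (leqP k k') => hk.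
  have : forall n, (k + n <= K)%N -> ff k <= ff (k + n).
    elim=> [|n IH] hn; first by rewrite addn0.
    have hn' : (k + n < K)%N by rewrite -addnS.
    apply: (le_trans (IH (ltnW hn'))).
    rewrite -subr_ge0 addnS ffS //; apply: mulr_ge0; first exact: exprn_ge0.
    by apply: Hup => //; apply: leq_addr.
  by move/(_ (k' - k)%N); rewrite subnKC //; apply.
have : forall n, (n <= k)%N -> ff k <= ff (k - n).
  elim=> [|n IH] hn; first by rewrite subn0.
  have e : (k - n = (k - n.+1).+1)%N by rewrite subnS prednK // subn_gt0.
  apply: (le_trans (IH (ltnW hn))); rewrite e.
  rewrite -subr_le0 ffS; last by apply: (leq_trans _ kK); rewrite -e leq_subr.
  apply: mulr_ge0_le0; first exact: exprn_ge0.
  by apply: Hdn; rewrite -e; apply: leq_subr.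
move/(_ (k - k')%N); rewrite subKn; last exact: ltnW.
by apply; apply: leq_subr.
Qed.

Lemma BR_local k : (k <= K)%N -> (k = 0%N \/ DD k.-1 <= 0) -> (k = K \/ 0 <= DD k) ->
  forall k', (k' <= K)%N -> value v p p' K k' <= value v p p' K k.
Proof.
move=> kK h1 h2 k' k'K; rewrite !valueE lerD2l lerN2.
apply: ff_min => //.
- move=> i ik; case: h1 => [k0|h1]; first by rewrite k0 in ik.
  have k0 : (0 < k)%N by apply: leq_ltn_trans ik.
  apply: (DD_down_all (j := k.-1)) => //; first by rewrite -ltnS prednK.
  by rewrite prednK.
- move=> i ki iK; case: h2 => [kK'|h2]; first by rewrite kK' leqNgt iK in ki.
  by apply: (DD_up_all ki iK).
Qed.

End BR.

Section Sig.
Variable R : realType.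
Variable K : nat.

Definition sgm (t : R) : 'I_K.+1 -> R := fun k => Num.max 0 (1 - `|t - (k : nat)%:R|).

Lemma sig_ge0 t (k : 'I_K.+1) : 0 <= sgm t k.
Proof. by rewrite /sgm le_max lexx. Qed.

Lemma sig_pos t (k : 'I_K.+1) : `|t - (k : nat)%:R| < 1 -> 0 < sgm t k.
Proof. by move=> h; rewrite /sgm lt_max subr_gt0 h orbT. Qed.

Lemma sig_cont t0 (k : 'I_K.+1) : {for t0, continuous (fun t : R => sgm t k)}.
Proof.
rewrite /sgm; apply: cMax; first exact: cC.
apply: cB; first exact: cC.
apply: cNorm; apply: cB; [exact: cI | exact: cC].
Qed.

Lemma sig_seg (j : nat) (s : R) (k : 'I_K.+1) : 0 <= s -> s <= 1 ->
  sgm (j%:R + s) k = if (k == j :> nat) then 1 - s else if (k == j.+1 :> nat) then s else 0.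
Proof.
move=> s0 s1; rewrite /sgm.
case: eqP => [->|h1].
  have -> : j%:R + s - j%:R = s :> R by ring.
  rewrite ger0_norm // max_r //; lra.
case: eqP => [->|h2].
  have -> : j%:R + s - j.+1%:R = s - 1 :> R by rewrite -natr1; ring.
  rewrite ler0_norm; last by lra.
  rewrite max_r //; lra.
apply: max_l.
have [hlt|hgt] := ltnP k j.
  have : ((k : nat).+1%:R <= j%:R :> R) by rewrite ler_nat.
  rewrite -natr1 => h.
  rewrite ger0_norm; lra.
have hgt' : (j.+2 <= k)%N.
  by rewrite ltn_neqAle eq_sym; apply/andP; split; [apply/eqP | rewrite ltn_neqAle eq_sym; apply/andP; split; [apply/eqP|]].
have : (j.+2%:R <= (k : nat)%:R :> R) by rewrite ler_nat.
rewrite -!natr1 => h.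
rewrite ler0_norm; lra.
Qed.

Lemma sum_seg (j : nat) (s : R) (F : nat -> R) : (j < K)%N -> 0 <= s -> s <= 1 ->
  \sum_(k < K.+1) sgm (j%:R + s) k * F k = (1 - s) * F j + s * F j.+1.
Proof.
move=> hj s0 s1.
rewrite (eq_bigr (fun k : 'I_K.+1 => (if (k == j :> nat) then (1 - s) * F j else 0)
   + (if (k == j.+1 :> nat) then s * F j.+1 else 0))); last first.
  move=> k _; rewrite sig_seg //; have [e1|n1] := eqVneq (k : nat) j.
    by rewrite e1 ?eqxx (ltn_eqF (ltnSn j)) addr0.
  rewrite ?(negbTE n1); have [e2|n2] := eqVneq (k : nat) j.+1.
    by rewrite e2 ?eqxx add0r.
  by rewrite ?(negbTE n2) mul0r addr0.
rewrite big_split /= -!big_mkcond /=.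
rewrite (big_ord1_eq _ (fun _ => (1 - s) * F j)) (big_ord1_eq _ (fun _ => s * F j.+1)).
by rewrite ltnS ltnW // ltnS hj.
Qed.

End Sig.

Local Open Scope classical_set_scope.
Local Open Scope ring_scope.

Lemma Ggen_cont_w (R : realType) (K : nat) (c m : R) (w : R -> 'I_K.+1 -> R) d x t0 :
  (forall k, {for t0, continuous (fun t : R => w t k)}) ->
  {for t0, continuous (fun t : R => Ggen c m (w t) d x)}.
Proof.
move=> hw; rewrite /Ggen /Mgen /Agen.
apply: cB.
  apply: cM; first exact: cC.
  apply: cS => k; apply: cM; [exact: hw | exact: cC].
apply: cM; first exact: cC.
apply: cB; first exact: cC.
apply: cE; apply: cN; apply: cM; last exact: cC.
apply: cM; first exact: cC.
apply: cS => k; apply: cM; [exact: hw | exact: cC].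
Qed.

Lemma exists_nat (R : realType) n (t : R) : 0 <= t -> t < n%:R ->
  exists j : nat, (j < n)%N /\ j%:R <= t < j%:R + 1.
Proof.
elim: n => [|n IH] t0 tn; first by move: tn; rewrite ltNge t0.
have [h|h] := ltP t n%:R.
  by have [j [jn hj]] := IH t0 h; exists j; split => //; apply: ltnW.
by exists n; split => //; rewrite h natr1.
Qed.


Lemma fp_bound (R : realType) (c m A x : R) : 0 < c -> 0 < m -> 0 < A ->
  c * (x * A) = m * (1 - expR (- (c * A / m))) -> 1 - x <= c * A / m.
Proof.
move=> c0 m0 A0.
have cA : c * A = m * (c * A / m) by rewrite [RHS]mulrC divfK // gt_eqF.
set y := c * A / m in cA *.
have y0 : 0 < y by rewrite /y divr_gt0 // mulr_gt0.
have -> : c * (x * A) = m * (x * y) by rewrite mulrCA cA; ring.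
have mn0 : m != 0 by rewrite gt_eqF.
move=> /(mulfI mn0) e.
set E := expR (- y) in e.
have E0 : 0 <= E by exact: expR_ge0.
have E1 : E * (1 + y) <= 1.
  have h : E * expR y = 1 by rewrite /E expRN mulVf // gt_eqF // expR_gt0.
  rewrite -[X in _ <= X]h; apply: ler_wpM2l => //; exact: expR_ge1Dx.
have E2 : E <= 1 - y + y ^+ 2.
  have y1 : 0 < 1 + y by lra.
  rewrite -(ler_pM2r y1); apply: (le_trans E1).
  have -> : (1 - y + y ^+ 2) * (1 + y) = 1 + y ^+ 3 by ring.
  by rewrite lerDl; apply: exprn_ge0; exact: ltW.
have h3 : (1 - x) * y <= y * y.
  have -> : (1 - x) * y = y - 1 + E by rewrite mulrBl mul1r e; ring.
  rewrite expr2 in E2; lra.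
by rewrite ler_pM2r in h3.
Qed.

Lemma aux_lt1 (R : realType) (a b : R) : a < b + 1 -> a - b < 1.
Proof. move=> h; lra. Qed.

Section Main.
Variables (R : realType) (nH mH mL v : R) (K : nat).
Hypotheses (hnH : 0 < nH) (hmH : 0 < mH) (hmL : 0 < mL) (hK : (0 < K)%N) (hv : 1 < v).
Local Ltac hyps := have := hnH; have := hmH; have := hmL; have := hv; move=> ? ? ? ?.
Implicit Types (t p : R).

Definition HFP (t p : R) := high_fixed_point nH mH (sgm (K:=K) t) p.
Definition P (t : R) : R := xget 1 (HFP t).
Definition wL (t : R) : 'I_K.+1 -> R := fun k => sgm (K:=K) t k * (1 - P t) ^+ k.
Definition dL : 'I_K.+1 -> nat := fun k => (K - k)%N.
Definition dH : 'I_K.+1 -> nat := fun k => (k : nat).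
Definition LFP (t p' : R) := low_fixed_point nH mL (sgm (K:=K) t) (P t) p'.
Definition P' (t : R) : R := xget 1 (LFP t).

Lemma HFP_E t p : HFP t p <-> FPgen nH mH (sgm (K:=K) t) dH p.
Proof. by []. Qed.

Lemma LFP_E t p' : LFP t p' <-> FPgen nH mL (wL t) dL p'.
Proof.
have eA : \sum_(k < K.+1) sgm (K:=K) t k * ((1 - P t) ^+ k * napps p' (K - k)) = Agen (wL t) dL p'.
  by apply: eq_bigr => k _; rewrite mulrA.
have eM : \sum_(k < K.+1) sgm (K:=K) t k * ((1 - P t) ^+ k * pmatch p' (K - k)) = Mgen (wL t) dL p'.
  by apply: eq_bigr => k _; rewrite mulrA.
by rewrite /LFP /low_fixed_point /FPgen /= eA eM.
Qed.

Lemma P_range t : 0 < P t <= 1.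
Proof.
rewrite /P; case: xgetP => [x _ /HFP_E [] //|_]; by rewrite ltr01 lexx.
Qed.

Lemma P'_range t : 0 < P' t <= 1.
Proof.
rewrite /P'; case: xgetP => [x _ /LFP_E [] //|_]; by rewrite ltr01 lexx.
Qed.

Lemma wL_ge0 t k : 0 <= wL t k.
Proof.
rewrite /wL; apply: mulr_ge0; first exact: sig_ge0.
by apply: exprn_ge0; have := P_range t; case/andP => _; rewrite subr_ge0.
Qed.

Lemma ND_H t : 0 < t -> t < K.+1%:R -> ND (sgm (K:=K) t) dH.
Proof.
move=> t0 tK.
have [j [jK /andP[hj1 hj2]]] := exists_nat (ltW t0) tK.
case: j jK hj1 hj2 => [|j] jK hj1 hj2.
  have h1 : (1 < K.+1)%N by rewrite ltnS.
  exists (Ordinal h1); split => //; apply: sig_pos => /=.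
  rewrite ltr_norml; move: hj2; rewrite add0r; lra.
exists (Ordinal jK); split => //; apply: sig_pos => /=.
rewrite ltr_norml; lra.
Qed.

Lemma P_spec t : 0 < t -> t < K.+1%:R -> HFP t (P t) /\ P t < 1.
Proof.
move=> t0 tK; have nd := ND_H t0 tK.
have hw : forall k, 0 <= sgm (K:=K) t k by move=> k; exact: sig_ge0.
have [x [x01 gx]] := Ggen_root hnH hmH hw nd.
have fx := FPgen_of_root hw nd x01 gx.
have hp : HFP t (P t) by apply: xgetPex; exists x; apply/HFP_E.
split => //; apply: (FPgen_lt1 hnH hmH hw nd); exact/HFP_E.
Qed.

Lemma ND_L t : 0 < t -> t < K%:R -> ND (wL t) dL.
Proof.
move=> t0 tK.
have [j [jK /andP[hj1 hj2]]] := exists_nat (ltW t0) tK.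
have jK' : (j < K.+1)%N by apply: ltnW.
exists (Ordinal jK'); split; last by rewrite /dL /= subn_gt0.
rewrite /wL /=; apply: mulr_gt0.
  by apply: sig_pos => /=; rewrite ltr_norml; lra.
apply: exprn_gt0; rewrite subr_gt0.
have tK1 : t < K.+1%:R by rewrite -natr1; lra.
by case: (P_spec t0 tK1).
Qed.

Lemma P'_spec t : 0 < t -> t < K%:R -> LFP t (P' t) /\ P' t < 1.
Proof.
move=> t0 tK; have nd := ND_L t0 tK.
have hw : forall k, 0 <= wL t k by move=> k; exact: wL_ge0.
have [x [x01 gx]] := Ggen_root hnH hmL hw nd.
have fx := FPgen_of_root hw nd x01 gx.
have hp : LFP t (P' t) by apply: xgetPex; exists x; apply/LFP_E.
split => //; apply: (FPgen_lt1 hnH hmL hw nd); exact/LFP_E.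
Qed.

Lemma P'_K : LFP K%:R (P' K%:R) /\ P' K%:R = 1.
Proof.
have h : forall k, wL K%:R k = 0 \/ dL k = 0%N.
  move=> k; have [e|ne] := eqVneq (k : nat) K; first by right; rewrite /dL e subnn.
  left; rewrite /wL /sgm; apply/eqP; rewrite mulf_eq0; apply/orP; left; apply/eqP.
  apply: max_l; rewrite subr_le0.
  have kK : (k < K)%N by rewrite ltn_neqAle ne -ltnS ltn_ord.
  have : ((k : nat).+1%:R <= K%:R :> R) by rewrite ler_nat.
  rewrite -natr1 => hk; rewrite ger0_norm; lra.
have [h1 h2] := FPgen_degen nH mL h.
have hp : LFP K%:R (P' K%:R) by apply: xgetPex; exists 1; apply/LFP_E.
by split => //; apply: h2; apply/LFP_E.
Qed.


Lemma near_itv (a b t0 : R) : a < t0 -> t0 < b -> \forall t \near t0, a < t /\ t < b.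
Proof.
move=> h1 h2; have hin : t0 \in `]a, b[ by rewrite in_itv /= h1 h2.
apply: filterS (near_in_itvoo hin) => t; rewrite in_itv /= => /andP[].
by split.
Qed.

Lemma P_cont t0 : 0 < t0 -> t0 < K.+1%:R -> {for t0, continuous P}.
Proof.
move=> t0p t0K.
have hw : forall t, forall k, 0 <= sgm (K:=K) t k by move=> t k; exact: sig_ge0.
have nd := ND_H t0p t0K.
have [hf0 _] := P_spec t0p t0K.
have g0 := root_of_FPgen (proj1 (HFP_E _ _) hf0).
have [P0 P1] := andP (P_range t0).
apply: (impl_cont (G := fun t x => Ggen nH mH (sgm (K:=K) t) dH x)).
- move=> x; apply: Ggen_cont_w => k; exact: sig_cont.
- by apply: filterE => t x y hxy hy; apply: (Ggen_mono hnH hmH dH (hw t) hxy hy).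
- apply: filterS (near_itv t0p t0K) => t [h1 h2].
  have [hf _] := P_spec h1 h2; split; first by have := P_range t; case/andP => a b; rewrite ltW.
  exact: (root_of_FPgen (proj1 (HFP_E _ _) hf)).
- move=> x x0 xl; rewrite -g0; exact: (Ggen_smono hnH hmH (hw t0) nd x0 xl P1).
- move=> x xl x1; rewrite -g0; apply: (Ggen_smono hnH hmH (hw t0) nd _ xl x1); exact: ltW.
Qed.

Lemma wL_cont t0 k : 0 < t0 -> t0 < K.+1%:R -> {for t0, continuous (fun t => wL t k)}.
Proof.
move=> h1 h2; rewrite /wL; apply: cM; first exact: sig_cont.
apply: cX; apply: cB; first exact: cC.
exact: P_cont.
Qed.

Lemma P'_cont t0 : 0 < t0 -> t0 < K%:R -> {for t0, continuous P'}.
Proof.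
move=> t0p t0K.
have t0K1 : t0 < K.+1%:R by rewrite -natr1; lra.
have hw : forall t, forall k, 0 <= wL t k by move=> t k; exact: wL_ge0.
have nd := ND_L t0p t0K.
have [hf0 _] := P'_spec t0p t0K.
have g0 := root_of_FPgen (proj1 (LFP_E _ _) hf0).
have [P0 P1] := andP (P'_range t0).
apply: (impl_cont (G := fun t x => Ggen nH mL (wL t) dL x)).
- move=> x; apply: Ggen_cont_w => k; exact: wL_cont.
- by apply: filterE => t x y hxy hy; apply: (Ggen_mono hnH hmL dL (hw t) hxy hy).
- apply: filterS (near_itv t0p t0K) => t [h1 h2].
  have [hf _] := P'_spec h1 h2; split; first by have := P'_range t; case/andP => a b; rewrite ltW.
  exact: (root_of_FPgen (proj1 (LFP_E _ _) hf)).
- move=> x x0 xl; rewrite -g0; exact: (Ggen_smono hnH hmL (hw t0) nd x0 xl P1).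
- move=> x xl x1; rewrite -g0; apply: (Ggen_smono hnH hmL (hw t0) nd _ xl x1); exact: ltW.
Qed.

Definition Dj (j : nat) (t : R) := DD v (P t) (P' t) K j.

Lemma Dj_cont j t0 : 0 < t0 -> t0 < K%:R -> {for t0, continuous (Dj j)}.
Proof.
move=> h1 h2.
have h3 : t0 < K.+1%:R by rewrite -natr1; lra.
rewrite /Dj /DD; apply: cB.
  apply: cM; first by apply: cB; [exact: cC | exact: P_cont].
  apply: cD; first exact: cC.
  apply: cX; apply: cB; [exact: cC | exact: P'_cont].
apply: cD; first exact: cC.
apply: cX; apply: cB; [exact: cC | exact: P'_cont].
Qed.

Lemma napps_1 (x : R) : napps x 1 = 1.
Proof. by rewrite nappsS napps0 expr0 add0r. Qed.

Lemma E0 : exists lo, 0 < lo < 1 /\ Dj 0 lo < 0.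
Proof.
hyps.
set b := mH * (v - 1) / (2 * v * nH).
have b0 : 0 < b by rewrite /b divr_gt0 // ?mulr_gt0 //; lra.
set lo := Num.min (1 / 2) b.
have lo0 : 0 < lo by rewrite /lo lt_min b0 andbT; lra.
have lo1 : lo <= 1 / 2 by rewrite /lo ge_min lexx.
have lob : lo <= b by rewrite /lo ge_min lexx orbT.
exists lo; split; first by apply/andP; split => //; lra.
have loK : lo < K.+1%:R.
  have : (1 <= K.+1%:R :> R) by rewrite ler1n.
  lra.
have [hf p1] := P_spec lo0 loK.
have [/andP[p0 _] eq _] := proj1 (HFP_E _ _) hf.
rewrite MgenE in eq.
have hA : Agen (sgm (K:=K) lo) dH (P lo) = lo.
  have := sum_seg (R:=R) (K:=K) (j:=0) (s:=lo) (fun n => napps (P lo) n) hK (ltW lo0) (le_trans lo1 (_ : 1/2 <= 1)).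
  rewrite mulr0n add0r napps0 napps_1 mulr0 add0r mulr1; apply.
  lra.
rewrite hA in eq.
have hq := fp_bound hnH hmH lo0 eq.
have hqv : (1 - P lo) * v <= (v - 1) / 2.
  apply: (le_trans (_ : _ <= nH * lo / mH * v)); first by rewrite ler_pM2r //; lra.
  apply: (le_trans (_ : _ <= nH * b / mH * v)).
    rewrite ler_pM2r; last lra.
    rewrite ler_pM2r ?invr_gt0 //; by rewrite ler_pM2l.
  rewrite /b le_eqVlt; apply/orP; left; apply/eqP; field.
  by rewrite !gt_eqF //; lra.
have /andP[q0 q1] := P'_range lo.
rewrite /Dj /DD.
set r1 := (1 - P' lo) ^+ _.
set r2 := (1 - P' lo) ^+ _.
have hr1 : r1 <= 1 by apply: exprn_ile1; lra.
have hr2 : 0 <= r2 by apply: exprn_ge0; lra.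
have hqr : (1 - P lo) * r1 <= 1 - P lo by apply: ler_piMr => //; lra.
have ex : (1 - P lo) * (v - 1 + r1) = (1 - P lo) * v - (1 - P lo) + (1 - P lo) * r1 by ring.
rewrite ex; lra.
Qed.

Lemma DjK : Dj K.-1 K%:R = 1 - v * P K%:R.
Proof.
rewrite /Dj /DD (proj2 P'_K) subrr prednK // subnn -subn1 subKn // expr0 expr1.
ring.
Qed.

Lemma EK b : b < K%:R -> 0 < Dj K.-1 K%:R ->
  exists hi, [/\ b < hi, (K.-1)%:R < hi, hi < K%:R & 0 < Dj K.-1 hi].
Proof.
hyps.
move=> bK; rewrite DjK => d0.
set d := 1 - v * P K%:R in d0.
have K0 : (0 < K%:R :> R) by rewrite ltr0n.
have KK1 : K%:R < K.+1%:R :> R by rewrite ltr_nat.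
have Hf : \forall t \near (K%:R : R), d / 2 < 1 - v * P t.
  have c : {for (K%:R : R), continuous (fun t => 1 - v * P t)}.
    apply: cB; first exact: cC.
    apply: cM; first exact: cC.
    exact: P_cont.
  apply: (@cvgr_gt _ _ _ _ _ _ c) => /=; move: d0; rewrite /d => d0; lra.
set a := Num.max b (Num.max (K.-1)%:R (K%:R - d * mL / (2 * nH))).
have aK : a < K%:R.
  rewrite /a !gt_max bK /=; apply/andP; split.
    by rewrite ltr_nat prednK.
  rewrite gtrBl; apply: divr_gt0; [apply: mulr_gt0 => //|]; lra.
have Ha := near_itv aK KK1.
have [e e0 He] : filter_from [set e | 0 < e] (ball (K%:R : R)) (fun t => d / 2 < 1 - v * P t /\ (a < t /\ t < K.+1%:R)).
  by apply/nbhs_ballP; apply: filterS2 Hf Ha => t h1 h2; split.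
set t := K%:R - e / 2.
have [ft [hat tK1]] : d / 2 < 1 - v * P t /\ (a < t /\ t < K.+1%:R).
  have e0' : 0 < e := e0.
  by apply: He; rewrite /ball /= /t ger0_norm; lra.
have tK : t < K%:R by rewrite /t; have e0' : 0 < e := e0; lra.
have ha : [/\ b < t, (K.-1)%:R < t & K%:R - d * mL / (2 * nH) < t].
  by move: hat; rewrite /a !gt_max => /andP[-> /andP[-> ->]].
case: ha => hb hK1 hd.
exists t; split => //.
have t0 : 0 < t by apply: le_lt_trans hK1; exact: ler0n.
have [hl p'1] := P'_spec t0 tK.
have [hp p1] := P_spec t0 tK1.
have /andP[p0 p1'] := P_range t.
have /andP[q0 q1] := P'_range t.
have [_ eq _] := proj1 (LFP_E _ _) hl.
rewrite MgenE in eq.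
set s := t - (K.-1)%:R.
have s0 : 0 <= s by rewrite /s; lra.
have s1 : s <= 1.
  have : (K.-1)%:R + 1 = K%:R :> R by rewrite natr1 prednK.
  rewrite /s; lra.
have hKp : (K.-1 < K)%N by rewrite prednK.
have hA : Agen (wL t) dL (P' t) = (1 - s) * (1 - P t) ^+ K.-1.
  have := sum_seg (R:=R) (K:=K) (j:=K.-1) (s:=s) (fun n => (1 - P t) ^+ n * napps (P' t) (K - n)) hKp s0 s1.
  have -> : (K.-1)%:R + s = t by rewrite /s; ring.
  rewrite prednK // subnn napps0 mulr0 mulr0 addr0 -subn1 subKn // napps_1 mulr1 => <-.
  by apply: eq_bigr => k _; rewrite /wL /dL mulrA.
rewrite hA in eq.
have s1' : s < 1.
  have : (K.-1)%:R + 1 = K%:R :> R by rewrite natr1 prednK.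
  rewrite /s; lra.
have qpos : 0 < (1 - P t) ^+ K.-1 by apply: exprn_gt0; lra.
have qle : (1 - P t) ^+ K.-1 <= 1 by apply: exprn_ile1; lra.
have A0 : 0 < (1 - s) * (1 - P t) ^+ K.-1 by apply: mulr_gt0 => //; lra.
have hq := fp_bound hnH hmL A0 eq.
have h2 : nH * ((1 - s) * (1 - P t) ^+ K.-1) / mL <= nH * (1 - s) / mL.
  rewrite ler_pM2r ?invr_gt0 // ler_pM2l //; apply: ler_piMr => //; lra.
have h3 : nH * (1 - s) / mL < d / 2.
  have e1 : 1 - s = K%:R - t.
    have : (K.-1)%:R + 1 = K%:R :> R by rewrite natr1 prednK.
    rewrite /s; lra.
  rewrite e1.
  have : K%:R - t < d * mL / (2 * nH) by lra.
  move=> h; apply: (lt_le_trans (_ : _ < nH * (d * mL / (2 * nH)) / mL)).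
    by rewrite ltr_pM2r ?invr_gt0 // ltr_pM2l.
  rewrite le_eqVlt; apply/orP; left; apply/eqP; field.
  by rewrite !gt_eqF.
rewrite /Dj /DD prednK // subnn -subn1 subKn // expr0 expr1.
have : 1 - P' t < d / 2 by lra.
move=> h4.
have -> : (1 - P t) * (v - 1 + 1) - (v - 1 + (1 - P' t)) = 1 - v * P t - (1 - P' t) by ring.
lra.
Qed.

Definition BRt (t : R) (k : nat) :=
  forall k' : 'I_K.+1, value v (P t) (P' t) K k' <= value v (P t) (P' t) K k.

Lemma BRt_of t k : (k <= K)%N -> (k = 0%N \/ Dj k.-1 t <= 0) -> (k = K \/ 0 <= Dj k t) ->
  BRt t k.
Proof.
move=> kK h1 h2 k'.
have /andP[p0 p1] := P_range t.
have /andP[q0 q1] := P'_range t.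
exact: (BR_local hv (ltW p0) p1 (ltW q0) q1 kK h1 h2 (ltn_ord k')).
Qed.

Lemma eq_at (j : nat) (s : R) : (j < K)%N -> 0 <= s -> s <= 1 -> 0 < j%:R + s ->
  (s < 1 -> BRt (j%:R + s) j) -> (0 < s -> BRt (j%:R + s) j.+1) ->
  symmetric_equilibrium nH mH mL v (sgm (K:=K) (j%:R + s)).
Proof.
move=> hj s0 s1 t0 B1 B2.
have tK : j%:R + s <= K%:R.
  have : (j.+1%:R <= K%:R :> R) by rewrite ler_nat.
  rewrite -natr1; lra.
have tK1 : j%:R + s < K.+1%:R by rewrite -natr1; lra.
split.
  split; first by move=> k; exact: sig_ge0.
  have := sum_seg (R:=R) (K:=K) (j:=j) (s:=s) (fun _ => 1) hj s0 s1.
  rewrite !mulr1 => h; rewrite (eq_bigr (fun k => sgm (K:=K) (j%:R + s) k * 1)).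
    by rewrite h; ring.
  by move=> k _; rewrite mulr1.
exists (P (j%:R + s)), (P' (j%:R + s)); split.
- by case: (P_spec t0 tK1).
- move: tK; rewrite le_eqVlt => /orP[/eqP e|tK].
    by rewrite e; case: P'_K.
  by case: (P'_spec t0 tK).
- move=> k hk k'.
  move: hk; rewrite sig_seg //.
  have [e1|n1] := eqVneq (k : nat) j.
    rewrite e1 ?eqxx => hs; apply: B1; lra.
  rewrite ?(negbTE n1); have [e2|n2] := eqVneq (k : nat) j.+1.
    by rewrite e2 ?eqxx => hs; apply: B2.
  by rewrite ?(negbTE n2) ltxx.
Qed.

Lemma seg j : (j < K)%N -> (j = 0%N \/ Dj j j%:R < 0) -> 0 < Dj j j.+1%:R ->
  exists sigma : 'I_K.+1 -> R, symmetric_equilibrium nH mH mL v sigma.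
Proof.
move=> hj hlo hhi.
have [lo [lo1 lo2 lo3 lo4]] : exists lo, [/\ j%:R <= lo, lo < j.+1%:R, 0 < lo & Dj j lo < 0].
  case: (posnP j) => [j0|j0].
    have [lo [/andP[l0 l1] l2]] := E0; exists lo; rewrite j0 mulr0n mulr1n; split => //; exact: ltW.
  case: hlo => [e|h]; first by rewrite e in j0.
  exists j%:R; split => //; first by rewrite ltr_nat.
  by rewrite ltr0n.
have [hi [hi1 hi2 hi3 hi4]] : exists hi, [/\ lo < hi, hi <= j.+1%:R, hi < K%:R & 0 < Dj j hi].
  have [e|ne] := eqVneq j.+1 K.
    have loK : lo < K%:R by rewrite -e.
    have ej : j = K.-1 by rewrite -e.
    have hhi' : 0 < Dj K.-1 K%:R by rewrite -ej -e.
    have [hi [h1 h2 h3 h4]] := EK loK hhi'.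
    by exists hi; rewrite ej; split => //; rewrite -ej e ltW.
  exists j.+1%:R; split => //.
  by rewrite ltr_nat ltn_neqAle ne hj.
have lohi : lo <= hi by exact: ltW.
have hc : {within `[lo, hi], continuous (Dj j)}.
  apply: continuous_in_subspaceT => x; rewrite inE /= in_itv /= => /andP[x1 x2].
  apply: Dj_cont; [exact: lt_le_trans lo3 x1 | exact: le_lt_trans x2 hi3].
have hb : Num.min (Dj j lo) (Dj j hi) <= 0 <= Num.max (Dj j lo) (Dj j hi).
  by rewrite ge_min le_max (ltW lo4) (ltW hi4) /= orbT.
have [t tin Dt] := @IVT R (Dj j) lo hi 0 lohi hc hb.
move: tin; rewrite in_itv /= => /andP[t1 t2].
have tlo : lo < t by rewrite lt_neqAle t1 andbT; apply/eqP => e; move: Dt; rewrite -e => Dt'; rewrite Dt' ltxx in lo4.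
have thi : t < hi by rewrite lt_neqAle t2 andbT; apply/eqP => e; move: Dt; rewrite e => Dt'; rewrite Dt' ltxx in hi4.
set s := t - j%:R.
have ht : t = j%:R + s by rewrite /s; ring.
have s0 : 0 < s by rewrite /s subr_gt0; exact: le_lt_trans lo1 tlo.
have s1 : s < 1.
  have := lt_le_trans thi hi2; rewrite -natr1 /s; exact: aux_lt1.
have /andP[p0 p1] := P_range t.
have /andP[q0 q1] := P'_range t.
have := eq_at hj (ltW s0) (ltW s1) _ _ _.
rewrite -ht => H; exists (sgm (K:=K) t); apply: H.
- exact: lt_trans lo3 tlo.
- move=> _; apply: BRt_of; [exact: ltnW | | by right; rewrite Dt].
  case: (posnP j) => [-> | j0]; first by left.
  right; apply: (DD_down_all hv (ltW p0) p1 (ltW q0) q1 (leq_pred j)); last by rewrite /Dj in Dt; rewrite Dt.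
  exact: hj.
- move=> _; apply: BRt_of => //; first by right => /=; rewrite Dt.
  have [e|ne] := eqVneq j.+1 K; first by left.
  right; apply: (DD_up_all hv (ltW p0) p1 (ltW q0) q1 (leqnSn j)); last by rewrite /Dj in Dt; rewrite Dt.
  by rewrite ltn_neqAle ne hj.
Qed.

Lemma claim n : forall j, (K - j = n)%N -> (1 <= j)%N -> (j <= K)%N -> Dj j.-1 j%:R <= 0 ->
  exists sigma : 'I_K.+1 -> R, symmetric_equilibrium nH mH mL v sigma.
Proof.
elim: n => [|n IH] j hn j1 jK hD.
  have ej : j = K by apply/eqP; rewrite eqn_leq jK /= -subn_eq0 hn.
  have hk : (K.-1 < K)%N by rewrite prednK.
  have e1 : (K.-1)%:R + 1 = K%:R :> R by rewrite natr1 prednK.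
  have := eq_at hk ler01 (lexx 1) _ _ _.
  rewrite e1 => H; exists (sgm (K:=K) K%:R); apply: H.
  - by rewrite ltr0n.
  - by move=> h; move: h; rewrite ltxx.
  - move=> _; rewrite prednK //; apply: BRt_of => //; last by left.
    by right; rewrite -ej.
have jK' : (j < K)%N by rewrite -subn_gt0 hn.
have [h0|h0] := leP 0 (Dj j j%:R).
  have := eq_at jK' (lexx 0) ler01 _ _ _.
  rewrite addr0 => H; exists (sgm (K:=K) j%:R); apply: H.
  - by rewrite ltr0n.
  - by move=> _; apply: BRt_of; [exact: ltnW | right | right].
  - by rewrite ltxx.
have [h1|h1] := leP (Dj j j.+1%:R) 0.
  by apply: (IH j.+1) => //; rewrite subnS hn.
exact: (seg jK' (or_intror h0) h1).
Qed.

Lemma main_exists : exists sigma : 'I_K.+1 -> R, symmetric_equilibrium nH mH mL v sigma.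
Proof.
have [h1|h1] := leP (Dj 0 1%:R) 0.
  by apply: (claim (n := (K - 1)%N)).
exact: (seg hK (or_introl erefl) h1).
Qed.

End Main.

Close Scope classical_set_scope.
Unset Implicit Arguments. Set Strict Implicit.

Theorem lemma2 (R : realType) (nH mH mL v : R) (K : nat) :
  0 < nH -> 0 < mH -> 0 < mL -> (0 < K)%N -> 1 < v ->
  exists sigma : 'I_K.+1 -> R, symmetric_equilibrium nH mH mL v sigma.
Proof.
move=> h1 h2 h3 h4 h5; exact: (main_exists h1 h2 h3 h4 h5).
Qed.
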